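(* Let $1\leq p\leq q$ be integers. Then $K_{p,q}$ is strong $p$-cop-win, and it is not strong $k$-cop-win for any $1\leq k\leq p-1$. Furthermore, $$\lim_{m\to\infty}\mathrm{capt}_p(K_{p,q},m)=\begin{cases}2\lceil q/p\rceil-2, & q>p,\\ 1, & q=p.\end{cases}$$
   Context: $K_{p,q}$ is the complete bipartite graph with parts of sizes $p$ and $q$. All graphs are reflexive (a player may stay in place). The game of $k$ cops and $m$ robbers on $G$: in round 0 the cops first choose starting vertices, then the robbers choose theirs. In each round $i\geq 1$, all $k$ cops move (each to an adjacent vertex or staying), then all $m$ robbers move likewise. Several players may occupy the same vertex. Whenever a cop and some robbers occupy the same vertex, those robbers are captured and take no further part in the game. Both sides have full information. The cops win if all robbers are captured after finitely many rounds. $G$ is $k$-cop-win if $k$ cops can always win against one robber. For a $k$-cop-win graph $G$, $\mathrm{capt}_k(G,m)$ is the index of the round in which the last robber is captured when $k$ cops play to minimize this index and $m$ robbers play to maximize it. $G$ is strong $k$-cop-win if $\lim_{m\to\infty}\mathrm{capt}_k(G,m)$ exists (and is finite). *)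

(* Defs.v *)
From mathcomp Require Import all_boot.
Set Implicit Arguments. Unset Strict Implicit. Unset Printing Implicit Defensive.

Section Game.
Variables (V : finType) (e : rel V).

Definition step (x y : V) : bool := (x == y) || e x y.

Variables (k m : nat).

Definition copsT := {ffun 'I_k -> V}.
(* robber j is at vertex v (Some v) or already captured (None) *)
Definition robsT := {ffun 'I_m -> option V}.

Definition capture (c : copsT) (r : robsT) : robsT :=
  [ffun j => match r j with
             | Some v => if [exists i, c i == v] then None else Some v
             | None => None end].

Definition all_captured (r : robsT) : Prop := forall j, r j = None.

Definition cops_move (c c' : copsT) : Prop := forall i, step (c i) (c' i).

Definition robs_move (r r' : robsT) : Prop :=
  forall j, match r j, r' j return Prop with
            | Some v, Some w => step v w
            | None, None => True
            | _, _ => False end.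

(* win n c r : with cops at c and (surviving) robbers at r, at the end of a
   round, the cops can ensure that all robbers are captured within the next
   n rounds, whatever the robbers do. *)
Fixpoint win (n : nat) (c : copsT) (r : robsT) : Prop :=
  match n with
  | 0 => all_captured r
  | n'.+1 => exists c' : copsT, cops_move c c' /\
       forall r' : robsT, robs_move (capture c' r) r' ->
         win n' c' (capture c' r')
  end.

(* the cops can ensure that the last robber is captured in round <= n
   (round 0 = placement: cops first, then robbers) *)
Definition can_win_by (n : nat) : Prop :=
  exists c0 : copsT, forall r0 : {ffun 'I_m -> V},
    win n c0 (capture c0 [ffun j => Some (r0 j)]).

Definition capt_is (t : nat) : Prop :=
  can_win_by t /\ forall n, can_win_by n -> t <= n.

End Game.

Definition cop_win (V : finType) (e : rel V) (k : nat) : Prop :=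
  exists n, can_win_by e k 1 n.

(* G is strong k-cop-win: k-cop-win and lim_{m->oo} capt_k(G,m) exists
   (a limit of a nat sequence: eventually constant) *)
Definition strong_cop_win (V : finType) (e : rel V) (k : nat) : Prop :=
  cop_win e k /\ exists L N, forall m, N <= m -> capt_is e k m L.

Definition Kbip (p q : nat) : rel ('I_p + 'I_q)%type :=
  fun x y => match x, y with
             | inl _, inr _ | inr _, inl _ => true
             | _, _ => false end.

Definition ceil_div (q p : nat) : nat := (q + p.-1) %/ p.
Arguments Kbip : clear implicits.

(* Main.v *)
Require Import Defs.
From mathcomp Require Import all_boot zify.
Set Implicit Arguments. Unset Strict Implicit. Unset Printing Implicit Defensive.

Section Generic.
Variables (V : finType) (e : rel V) (k m : nat).

Definition copset (c : copsT V k) : {set V} := [set c i | i in 'I_k].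
Definition spread (C R : {set V}) : {set V} :=
  [set v | (v \notin C) && [exists u, [&& u \in R, u \notin C & step e u v]]].

Fixpoint cwin (n : nat) (c : copsT V k) (R : {set V}) : Prop :=
  match n with 0 => R = set0
  | n'.+1 => exists c', cops_move e c c' /\ cwin n' c' (spread (copset c') R) end.

Lemma memcop c v : (v \in copset c) = [exists i, c i == v].
Proof. by apply/imsetP/existsP => [[i _ ->]|[i /eqP <-]]; exists i. Qed.

Lemma capture_keep c (r : robsT V m) j v :
  r j = Some v -> v \notin copset c -> capture c r j = Some v.
Proof. by move=> H; rewrite memcop ffunE H => /negbTE ->. Qed.

Lemma card_copset (c : copsT V k) : #|copset c| <= k.
Proof. by rewrite (leq_trans (leq_imset_card _ _)) // card_ord. Qed.

Variable d : 'I_m -> nat -> V.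
Definition rmove t (c : copsT V k) (r : robsT V m) : robsT V m :=
  [ffun j => match r j with
    | Some u => if step e u (d j t.+1) && (d j t.+1 \notin copset c)
                then Some (d j t.+1) else Some u
    | None => None end].

Lemma rmove_ok t c r : robs_move e r (rmove t c r).
Proof.
move=> j; rewrite ffunE; case: (r j) => [u|] //.
by case: ifP => [/andP[]|] //; rewrite /step eqxx.
Qed.

Definition Inv n t (R : {set V}) (r : robsT V m) :=
  forall v, v \in R -> forall s : nat -> V,
    exists j, r j = Some v /\ forall i, t < i <= t + n -> d j i = s i.

Lemma sim n : forall t c R r, Inv n t R r -> win e n c r -> cwin n c R.
Proof.
elim: n => [|n IH] t c R r HI /=.
- move=> Hall; apply/setP => v; rewrite inE; apply/negP => Hv.
  have [j [Hj _]] := HI v Hv (fun _ => v). by rewrite Hall in Hj.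
- move=> [c' [Hm Hw]]; exists c'; split=> //.
  apply: (IH t.+1 c' _ _ _ (Hw _ (rmove_ok t c' (capture c' r)))).
  move=> v; rewrite inE => /andP[HvC /existsP[u /and3P[HuR HuC Huv]]] s.
  have [j [Hj Hs]] := HI u HuR (fun i => if i == t.+1 then v else s i).
  have Hd : d j t.+1 = v by rewrite Hs ?eqxx //; lia.
  exists j; split.
  + apply: capture_keep => //. rewrite ffunE (capture_keep Hj HuC) Hd.
    by rewrite Huv HvC.
  + move=> i Hi; rewrite Hs; last lia. by case: eqP => // ?; lia.
Qed.

Lemma sim0 n : (forall s : nat -> V, exists j, forall i, i <= n -> d j i = s i) ->
  can_win_by e k m n -> exists c0, cwin n c0 (~: copset c0).
Proof.
move=> Hd [c0 H]; exists c0; apply: (@sim n 0 c0 _ _ _ (H [ffun j => d j 0])).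
move=> v; rewrite inE => Hv s.
have [j Hj] := Hd (fun i => if i == 0 then v else s i).
exists j; split.
- apply: capture_keep => //; rewrite !ffunE /=; by rewrite (Hj 0).
- move=> i Hi; rewrite Hj; last lia. by case: eqP => //; lia.
Qed.
End Generic.

Lemma exists_d (V : finType) (v0 : V) m n : #|V| ^ n.+1 <= m ->
  exists d : 'I_m -> nat -> V, forall s, exists j, forall i, i <= n -> d j i = s i.
Proof.
move=> Hm.
pose W := {ffun 'I_n.+1 -> V}.
pose w0 : W := [ffun _ => v0].
exists (fun j i => (nth w0 (enum W) j) (inord i)) => s.
pose w : W := [ffun i : 'I_n.+1 => s i].
have Hw : w \in enum W by rewrite mem_enum.
have Hj : index w (enum W) < m.
  apply: leq_trans Hm. have -> : #|V| ^ n.+1 = #|W| by rewrite card_ffun card_ord.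
  by rewrite cardE index_mem.
exists (Ordinal Hj) => i Hi /=.
by rewrite nth_index // ffunE inordK.
Qed.

Section KB.
Variables (p q : nat).
Local Notation V := ('I_p + 'I_q)%type.
Local Notation e := (Kbip p q).

Definition LA (S : {set V}) : {set 'I_p} := [set a | inl a \in S].
Definition LB (S : {set V}) : {set 'I_q} := [set b | inr b \in S].

Definition nA (S : {set V}) := #|LA S|.
Definition nB (S : {set V}) := #|LB S|.

Lemma card_sumset (S : {set V}) : #|S| = nA S + nB S.
Proof.
rewrite /nA /nB.
have HS : S = inl @: LA S :|: inr @: LB S.
  apply/setP => [[a|b]]; rewrite !inE.
  - rewrite mem_imset; last by move=> ? ? [].
    have -> : (inl a \in inr @: LB S) = false by apply/imsetP => -[].
    by rewrite inE orbF.
  - rewrite (mem_imset _ _ (f:=inr)); last by move=> ? ? [].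
    have -> : (inr b \in inl @: LA S) = false by apply/imsetP => -[].
    by rewrite inE.
rewrite {1}HS cardsU.
have -> : inl @: LA S :&: inr @: LB S = set0.
  apply/setP => v; rewrite !inE; apply/negP => /andP[/imsetP[a _ ->] /imsetP[]] //.
rewrite cards0 subn0 !card_imset //; by move=> ? ? [].
Qed.

Definition xR (R : {set V}) := nA (~: R).
Definition yR (R : {set V}) := nB (~: R).

Lemma card_LA (S : {set V}) : nA S + xR S = p.
Proof. rewrite /xR /nA.
have -> : LA (~: S) = ~: LA S by apply/setP => a; rewrite !inE.
by rewrite cardsC card_ord.
Qed.

Lemma card_LB (S : {set V}) : nB S + yR S = q.
Proof. rewrite /yR /nB.
have -> : LB (~: S) = ~: LB S by apply/setP => a; rewrite !inE.
by rewrite cardsC card_ord.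
Qed.


Fixpoint bnd (s G F : nat) := match s with 0 => F | s'.+1 => bnd s' F (G + p) end.

Lemma bnd_mono s : forall G F, G <= F <= G + p -> F <= bnd s G F.
Proof.
elim: s => [|s IH] G F H //=.
apply: leq_trans (IH _ _ _); lia.
Qed.

Lemma bnd_even h : forall a, bnd h.*2 a a = a + p * h.
Proof.
elim: h => [|h IH] a; first by rewrite /= muln0 addn0.
rewrite doubleS /= IH mulnS; lia.
Qed.

Lemma bnd_odd h a : bnd h.*2.+1 a a = a + p * h.+1.
Proof.
rewrite -[bnd _ _ _]/(bnd h.*2 a (a + p)).
elim: h a => [|h IH] a; first by rewrite /= muln1.
rewrite doubleS /= IH !mulnS; lia.
Qed.

Hypothesis pq : p <= q.

Lemma trans (C R : {set V}) G F : #|C| <= p -> p <= F -> G <= F <= G + p ->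
  xR R <= G -> yR R <= G -> xR R + yR R <= F -> ~~ (R \subset C) ->
  spread e C R != set0 /\ xR (spread e C R) <= F /\ yR (spread e C R) <= F /\
  xR (spread e C R) + yR (spread e C R) <= G + p.
Proof.
move=> HC HF HGF Hx Hy Hxy /subsetPn [v HvR HvC].
set R' := spread e C R.
have sub : forall u, u \in R -> u \notin C -> u \in R'.
  move=> u Hu Hu'; rewrite inE Hu' /=; apply/existsP; exists u.
  by rewrite Hu Hu' /step eqxx.
have ne : R' != set0 by apply/set0Pn; exists v; apply: sub.
have cC := card_sumset C.
have cAR := card_LA R; have cBR := card_LB R.
have A1 : (exists b, [&& inr b \in R & inr b \notin C]) -> xR R' = nA C.
  move=> [b /andP[Hb1 Hb2]]; rewrite /xR /nA; apply: eq_card => a; rewrite !inE.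
  apply/idP/idP => [|HaC].
  - by apply: contraR => HaC; rewrite HaC /=; apply/existsP; exists (inr b); rewrite Hb1 Hb2 /step orbT.
  - by apply/negP => /andP[] ; rewrite HaC.
have B1 : (exists a, [&& inl a \in R & inl a \notin C]) -> yR R' = nB C.
  move=> [b /andP[Hb1 Hb2]]; rewrite /yR /nB; apply: eq_card => a; rewrite !inE.
  apply/idP/idP => [|HaC].
  - by apply: contraR => HaC; rewrite HaC /=; apply/existsP; exists (inl b); rewrite Hb1 Hb2 /step orbT.
  - by apply/negP => /andP[] ; rewrite HaC.
clearbody R'.
have A2 : xR R' <= xR R + nA C.
  rewrite /xR /nA.
  apply: leq_trans (leq_card_setU _ _); apply: subset_leq_card.
  apply/subsetP => a; rewrite !inE => Ha; apply/negPn/negP; rewrite negb_or negbK => /andP[H1 H2].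
  by move: Ha; rewrite sub.
have B2 : yR R' <= yR R + nB C.
  rewrite /yR /nB.
  apply: leq_trans (leq_card_setU _ _); apply: subset_leq_card.
  apply/subsetP => a; rewrite !inE => Ha; apply/negPn/negP; rewrite negb_or negbK => /andP[H1 H2].
  by move: Ha; rewrite sub.
case: (boolP [exists a, (inl a \in R) && (inl a \notin C)]) => [/existsP EA|NA];
case: (boolP [exists b, (inr b \in R) && (inr b \notin C)]) => [/existsP EB|NB].
- rewrite (A1 EB) (B1 EA); split=> //; lia.
- have HB : nB R <= nB C.
    rewrite /nB.
    apply: subset_leq_card; apply/subsetP => b; rewrite !inE => Hb.
    by apply: contraR NB => Hb'; apply/existsP; exists b; rewrite Hb Hb'.
  rewrite (B1 EA); split=> //; lia.
- have HA : nA R <= nA C.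
    rewrite /nA.
    apply: subset_leq_card; apply/subsetP => b; rewrite !inE => Hb.
    by apply: contraR NA => Hb'; apply/existsP; exists b; rewrite Hb Hb'.
  rewrite (A1 EB); split=> //; lia.
- exfalso; case: v HvR HvC => [a|b] H1 H2.
  + by move/existsP: NA; apply; exists a; rewrite H1 H2.
  + by move/existsP: NB; apply; exists b; rewrite H1 H2.
Qed.

Lemma Kmain n : forall (c : copsT V p) R G F, R != set0 -> p <= F -> G <= F <= G + p ->
  xR R <= G -> yR R <= G -> xR R + yR R <= F -> cwin e n c R ->
  0 < n /\ q <= bnd n.-1 G F.
Proof.
elim: n => [|n IH] c R G F HR HF HGF Hx Hy Hxy /=.
  by move=> H; rewrite H eqxx in HR.
move=> [c' [_ Hw]].
have HC := card_copset c'.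
case: (boolP (R \subset copset c')) => Hs.
  split=> //; apply: leq_trans (bnd_mono _ HGF).
  have := leq_trans (subset_leq_card Hs) HC; rewrite card_sumset.
  have := card_LA R; have := card_LB R; lia.
have [ne [h1 [h2 h3]]] := trans HC HF HGF Hx Hy Hxy Hs.
have [Hn Hq] := IH _ _ F (G + p) ne (leq_addl _ _) ltac:(lia) h1 h2 h3 Hw.
by case: n IH Hw Hn Hq.
Qed.
End KB.

Section NS.
Variables (p q k : nat).
Local Notation V := ('I_p + 'I_q)%type.
Local Notation e := (Kbip p q).
Hypothesis kp : k < p.
Hypothesis pq : p <= q.

Lemma freeA (c c' : copsT V k) : cops_move e c c' ->
  exists a, (inl a \notin copset c) && (inl a \notin copset c').
Proof.
move=> Hm.
have a0 : 'I_p := Ordinal (leq_ltn_trans (leq0n k) kp).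
pose g i := match c' i with inl a => a | inr _ => match c i with inl a => a | inr _ => a0 end end.
set S := [set a | (inl a \in copset c) || (inl a \in copset c')].
have Hsub : S \subset [set g i | i in 'I_k].
  apply/subsetP => a; rewrite inE !memcop => /orP[/existsP[i /eqP Hi]|/existsP[i /eqP Hi]];
    apply/imsetP; exists i => //; rewrite /g.
  - rewrite Hi; have := Hm i; rewrite Hi; case: (c' i) => [a'|b] //=.
    by rewrite /step /= orbF => /eqP[->].
  - by rewrite Hi.
have Hlt : #|S| < p.
  apply: leq_ltn_trans (subset_leq_card Hsub) _.
  apply: leq_ltn_trans (leq_imset_card _ _) _. by rewrite card_ord.
have : ~~ ([set: 'I_p] \subset S).
  apply/negP => H; move: (subset_leq_card H); by rewrite cardsT card_ord leqNgt Hlt.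
case/subsetPn => a _; rewrite inE negb_or => H; by exists a.
Qed.

Lemma freeB (c c' : copsT V k) : cops_move e c c' ->
  exists b, (inr b \notin copset c) && (inr b \notin copset c').
Proof.
move=> Hm.
have b0 : 'I_q := Ordinal (leq_trans (leq_ltn_trans (leq0n k) kp) pq).
pose g i := match c' i with inr a => a | inl _ => match c i with inr a => a | inl _ => b0 end end.
set S := [set a | (inr a \in copset c) || (inr a \in copset c')].
have Hsub : S \subset [set g i | i in 'I_k].
  apply/subsetP => a; rewrite inE !memcop => /orP[/existsP[i /eqP Hi]|/existsP[i /eqP Hi]];
    apply/imsetP; exists i => //; rewrite /g.
  - rewrite Hi; have := Hm i; rewrite Hi; case: (c' i) => [b|a'] //=.
    by rewrite /step /= orbF => /eqP[->].
  - by rewrite Hi.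
have Hlt : #|S| < q.
  apply: leq_ltn_trans (subset_leq_card Hsub) _.
  apply: leq_ltn_trans (leq_imset_card _ _) _. rewrite card_ord. exact: leq_trans kp pq.
have : ~~ ([set: 'I_q] \subset S).
  apply/negP => H; move: (subset_leq_card H); by rewrite cardsT card_ord leqNgt Hlt.
case/subsetPn => a _; rewrite inE negb_or => H; by exists a.
Qed.

Lemma NS n : forall c : copsT V k, cwin e n c (~: copset c) -> False.
Proof.
elim: n => [|n IH] c /=.
  move=> H; have := cardsC (copset c); rewrite H cards0 addn0 card_sum !card_ord => Hc.
  have := card_copset c; rewrite Hc; lia.
move=> [c' [Hm Hw]]; apply: (IH c').
have <- // : spread e (copset c') (~: copset c) = ~: copset c'.
apply/setP => v; rewrite !inE.
have [a /andP[Ha1 Ha2]] := freeA Hm; have [b /andP[Hb1 Hb2]] := freeB Hm.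
case: (boolP (v \in copset c')) => Hv //=.
apply/existsP; case: v Hv => [a'|b'] Hv; [exists (inr b) | exists (inl a)];
  by rewrite !inE ?Hb1 ?Hb2 ?Ha1 ?Ha2 /step orbT.
Qed.
End NS.

Section Up.
Variables (p q m : nat) (q0 : 'I_q).
Local Notation V := ('I_p + 'I_q)%type.
Local Notation e := (Kbip p q).

Definition cA : copsT V p := [ffun i : 'I_p => inl i].
Definition cB j : copsT V p := [ffun i : 'I_p => inr (insubd q0 (j * p + i))].
Definition PA j (r : robsT V m) := forall x v, r x = Some v ->
  if v is inr b then j * p <= b else False.
Definition PB j (r : robsT V m) := forall x v, r x = Some v ->
  if v is inr b then j * p <= b else True.

Lemma capA (r : robsT V m) x :
  capture cA r x = match r x with Some (inl _) => None | s => s end.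
Proof.
rewrite ffunE; case: (r x) => [[a|b]|] //; case: existsP => //.
- by case; exists a; rewrite ffunE.
- by case=> i; rewrite ffunE.
Qed.

Lemma capB j (r : robsT V m) x (b : 'I_q) : r x = Some (inr b) ->
  j * p <= b < j * p + p -> capture (cB j) r x = None.
Proof.
move=> H Hb; rewrite ffunE H; case: existsP => // -[].
have Hi : b - j * p < p by lia.
exists (Ordinal Hi); rewrite ffunE /=; apply/eqP; congr inr; apply: val_inj.
rewrite val_insubd /= subnKC ?ltn_ord //; lia.
Qed.

Lemma capSome (c : copsT V p) (r : robsT V m) x v :
  capture c r x = Some v -> r x = Some v.
Proof. by rewrite ffunE; case: (r x) => // u; case: ifP => // _ [->]. Qed.

Lemma TA j (r r' : robsT V m) : PB j r -> robs_move e (capture cA r) r' ->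
  PA j (capture cA r').
Proof.
move=> HB Hm x v; rewrite capA; have := Hm x; rewrite capA.
case Er: (r x) => [[a|b]|] //=.
- by case: (r' x).
- have := HB x _ Er => /= Hb.
  case: (r' x) => [[a'|b']|] //= Hst [<-] /=.
  by move: Hst; rewrite /step /= orbF => /eqP[<-].
- by case: (r' x).
Qed.

Lemma TB j (r r' : robsT V m) : PA j r -> robs_move e (capture (cB j) r) r' ->
  PB j.+1 (capture (cB j) r').
Proof.
move=> HA Hm x v /capSome Hv; have := Hm x; rewrite Hv.
case E: (capture (cB j) r x) => [u|] //.
have Hr := capSome E; have := HA _ _ Hr.
case: u E Hr => [a|b] E Hr //= Hb.
have Hb2 : j.+1 * p <= b.
  rewrite mulSn; case: (leqP (p + j * p) b) => // Hlt.
  by rewrite (capB Hr) in E => //; rewrite Hb addnC.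
case: v Hv => [a'|b'] Hv //= Hst.
by move: Hst; rewrite /step /= orbF => /eqP[<-].
Qed.

Lemma final j (r r' : robsT V m) : PA j r -> q <= j * p + p ->
  robs_move e (capture (cB j) r) r' -> all_captured (capture (cB j) r').
Proof.
move=> HA Hq Hm.
have Hall : forall x, capture (cB j) r x = None.
  move=> x; case E: (r x) => [u|]; last by rewrite ffunE E.
  have := HA _ _ E; case: u E => [a|b] E //= Hb.
  apply: capB E _; have := ltn_ord b; lia.
move=> x; have := Hm x; rewrite Hall; case E: (r' x) => // _.
by rewrite ffunE E.
Qed.

Lemma cmAB j i : step e (cA i) (cB j i).
Proof. by rewrite !ffunE /step /Kbip orbT. Qed.
Lemma cmBA j i : step e (cB j i) (cA i).
Proof. by rewrite !ffunE /step /Kbip orbT. Qed.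

Lemma fromA k : forall j (r : robsT V m), PA j r -> q <= (j + k).+1 * p ->
  win e (2 * k + 1) cA r.
Proof.
elim: k => [|k IH] j r HA Hq.
  exists (cB j); split; first by move=> i; apply: cmAB.
  move=> r' Hm; apply: final HA _ Hm; move: Hq; rewrite addn0 mulSn; lia.
have -> : 2 * k.+1 + 1 = (2 * k + 1).+2 by lia.
exists (cB j); split; first by move=> i; apply: cmAB.
move=> r1 Hm1; exists cA; split; first by move=> i; apply: cmBA.
move=> r2 Hm2; apply: IH (TA (TB HA Hm1) Hm2) _.
by rewrite addSn -addnS.
Qed.

Hypothesis p0 : 0 < p.

Lemma upper_lt : p < q -> can_win_by e p m (2 * ceil_div q p - 2).
Proof.
move=> pq; set r := ceil_div q p.
have r2 : 2 <= r by rewrite /r /ceil_div leq_divRL //; lia.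
have rq : q <= r * p.
  have := divn_eq (q + p.-1) p; have := ltn_pmod (q + p.-1) p0.
  rewrite -/(ceil_div q p) -/r; lia.
exists (cB 0) => r0.
set rI := capture (cB 0) _.
have HB : PB 1 rI.
  move=> x v Hc; have := capSome Hc; rewrite ffunE => -[Hv].
  case: v Hc Hv => [a|b] Hc Hv //=; rewrite mul1n.
  case: (leqP p b) => // Hb.
  rewrite (capB (b:=b)) in Hc => //; first by rewrite ffunE Hv.
have -> : 2 * r - 2 = (2 * (r - 2) + 1).+1 by lia.
exists cA; split; first by move=> i; apply: cmBA.
move=> r' Hm; apply: fromA (TA HB Hm) _.
by have -> : (1 + (r - 2)).+1 = r by lia.
Qed.

Lemma upper_eq : q <= p -> can_win_by e p m 1.
Proof.
move=> qp; exists cA => r0.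
set rI := capture cA _.
have HA : PA 0 rI.
  move=> x v; rewrite capA ffunE; by case: (r0 x) => [a|b] //= [<-].
exists (cB 0); split; first by move=> i; apply: cmAB.
move=> r' Hm; apply: final HA _ Hm; lia.
Qed.
End Up.
Unset Implicit Arguments.

Theorem mainTheorem17 (p q : nat) :
  1 <= p -> p <= q ->
  strong_cop_win (Kbip p q) p /\
  (forall k, 1 <= k <= p.-1 -> ~ strong_cop_win (Kbip p q) k) /\
  (exists N, forall m, N <= m ->
     capt_is (Kbip p q) p m
       (if p < q then 2 * ceil_div q p - 2 else 1)).
Proof.
move=> p1 pq.
have q1 : 0 < q by lia.
pose q0 : 'I_q := Ordinal q1.
pose a0 : 'I_p := Ordinal p1.
pose v0 : ('I_p + 'I_q)%type := inl a0.
have V0 : 0 < #|{: 'I_p + 'I_q}| by rewrite card_sum !card_ord; lia.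
set T := if p < q then 2 * ceil_div q p - 2 else 1.
have Hup : forall m, can_win_by (Kbip p q) p m T.
  move=> m; rewrite /T; case: ifP => H; first exact: upper_lt.
  apply: upper_eq => //; lia.
have Hlow : forall m n, #|{: 'I_p + 'I_q}| ^ T <= m ->
    can_win_by (Kbip p q) p m n -> T <= n.
  move=> m n Hm Hc; case: (leqP T n) => // HnT; exfalso.
  have [d Hd] := exists_d v0 (leq_trans (leq_pexp2l V0 HnT) Hm).
  have [c0 Hc0] := sim0 Hd Hc.
  have HC := card_copset c0.
  have HS := card_sumset (copset c0).
  have HC2 : nA (copset c0) + nB (copset c0) <= p by rewrite -HS.
  have Hne : ~: copset c0 != set0.
    apply/negP => /eqP H0; have := cardsC (copset c0).
    rewrite H0 cards0 addn0 card_sum !card_ord => E; move: HC; rewrite E; lia.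
  have Hx : xR (~: copset c0) <= p.
    rewrite /xR setCK; apply: leq_trans HC2; apply: leq_addr.
  have Hy : yR (~: copset c0) <= p.
    rewrite /yR setCK; apply: leq_trans HC2; apply: leq_addl.
  have Hxy : xR (~: copset c0) + yR (~: copset c0) <= p by rewrite /xR /yR setCK.
  have [Hn Hq] := @Kmain p q pq n c0 _ p p Hne (leqnn p) ltac:(lia) Hx Hy Hxy Hc0.
  move: HnT; rewrite /T; case: ifP => [pq'|]; last by lia.
  set r := ceil_div q p => HnT.
  have rq : r * p <= q + p.-1.
    have := divn_eq (q + p.-1) p; rewrite -/(ceil_div q p) -/r; lia.
  have r2 : 2 <= r by rewrite /r /ceil_div leq_divRL //; lia.
  have Er : p * (r - 2) + 2 * p = r * p by rewrite mulnC -mulnDl subnK.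
  set h := (n.-1)./2.
  have := odd_double_half n.-1; rewrite -/h.
  case: (odd n.-1) => E.
  - rewrite -E add1n bnd_odd in Hq.
    have Hh : h.+1 <= r - 2 by lia.
    have := leq_mul (leqnn p) Hh; lia.
  - rewrite -E add0n bnd_even in Hq.
    have Hh : h <= r - 2 by lia.
    have := leq_mul (leqnn p) Hh; lia.
have Hcapt : exists N, forall m, N <= m -> capt_is (Kbip p q) p m T.
  exists (#|{: 'I_p + 'I_q}| ^ T) => m Hm; split; first exact: Hup.
  by move=> n; apply: Hlow.
split; [|split] => //.
- split; first by exists T; apply: Hup.
  have [N HN] := Hcapt; by exists T, N.
- move=> k /andP[k1 kp] [_ [L [N H]]].
  set m := N + #|{: 'I_p + 'I_q}| ^ L.+1.
  have [Hc _] := H m (leq_addr _ _).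
  have [d Hd] := exists_d v0 (leq_addl N _ : _ <= m).
  have [c0 Hc0] := sim0 Hd Hc.
  apply: (@NS p q k _ pq L c0 Hc0); lia.
Qed.
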